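(* Let $(f,p)$ be a mechanism with $f_1(v,k)=k f_2(v,k)$ for all $(v,k)\in V\times K$. Then $(f,p)$ is incentive compatible if and only if for every $(v,k)\in V\times K$: (1) $f_2(v,k)\le f_2(v',k)$ for all $v'>v$ in $V$; (2) $p(v,k)=p(0,1)+v f_2(v,k)-\int_0^v f_2(t,k)\,dt$; (3) $\int_0^v f_2(t,k')\,dt\le\int_0^v f_2(t,k)\,dt$ for all $k'>k$ in $K$; (4) $\int_0^{vk/k'} f_2(t,k)\,dt\le\int_0^v f_2(t,k')\,dt$ for all $k'>k$ in $K$.
   Context: An agent has private type $(v,k)\in V\times K$, $V=[0,1]$, $K=(0,1]$, and from an outcome $(a_1,a_2,t)$ with $a_1,a_2\in[0,1]$ (quantities of two divisible goods) and $t\in\mathbb{R}$ (payment by the agent) gets utility $U_{(v,k)}(a_1,a_2,t)=v\min\{a_1/k,a_2\}-t$. A mechanism is a pair $(f,p)$ with $f=(f_1,f_2):V\times K\to[0,1]^2$, $p:V\times K\to\mathbb{R}$. It is incentive compatible if $U_{(v,k)}(f(v,k),p(v,k))\ge U_{(v,k)}(f(v',k'),p(v',k'))$ for all types $(v,k),(v',k')$. *)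

(* Defs.v *)
From Stdlib Require Import Reals.
From Coquelicot Require Import Coquelicot.
Open Scope R_scope.

Definition inV (v : R) : Prop := 0 <= v <= 1.
Definition inK (k : R) : Prop := 0 < k <= 1.

Definition U (v k a1 a2 t : R) : R := v * Rmin (a1 / k) a2 - t.

(* A mechanism (f1,f2,p) is given as functions R -> R -> R; only their values
   on V x K matter.  It is a mechanism when f maps V x K into [0,1]^2. *)
Definition is_mechanism (f1 f2 : R -> R -> R) : Prop :=
  forall v k, inV v -> inK k ->
    0 <= f1 v k <= 1 /\ 0 <= f2 v k <= 1.

Definition incentive_compatible (f1 f2 p : R -> R -> R) : Prop :=
  forall v k v' k', inV v -> inK k -> inV v' -> inK k' ->
    U v k (f1 v' k') (f2 v' k') (p v' k') <= U v k (f1 v k) (f2 v k) (p v k).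

(* Main.v *)
Require Import Defs.
From Stdlib Require Import Reals Lra Lia List.
From Coquelicot Require Import Coquelicot.
Open Scope R_scope.

Definition Sandw (g u : R -> R) (a b : R) : Prop :=
  forall x y, a <= x -> x <= y -> y <= b ->
    (y - x) * g x <= u y - u x <= (y - x) * g y.

Definition lastp (s : @SF_seq R) : R := seq.last (SF_h s) (SF_lx s).

Lemma lastp_cons (h : R * R) s : lastp (SF_cons h s) = lastp s.
Proof. destruct s; reflexivity. Qed.

Lemma step_cons (h : R * R) s :
  seq_step (SF_lx (SF_cons h s)) = Rmax (Rabs (SF_h s - fst h)) (seq_step (SF_lx s)).
Proof. destruct s; reflexivity. Qed.

Lemma env_sum (g u : R -> R) a b (H : Sandw g u a b) :
  forall s : @SF_seq R, pointed_subdiv s -> a <= SF_h s -> lastp s <= b ->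
   SF_h s <= lastp s /\
   Rabs (Riemann_sum g s - (u (lastp s) - u (SF_h s)))
     <= seq_step (SF_lx s) * (g (lastp s) - g (SF_h s)).
Proof.
  intro s; induction s as [x0|[x0 xi] s IH] using (@SF_cons_ind R).
  - intros _ _ _. unfold lastp; simpl.
    replace (Riemann_sum g (SF_nil x0)) with 0 by reflexivity.
    split; [lra|]. replace (0 - (u x0 - u x0)) with 0 by ring.
    rewrite Rabs_R0, Rminus_diag, Rmult_0_r; lra.
  - intros Hp Ha Hb.
    rewrite lastp_cons in *.
    assert (H0 := Hp 0%nat). simpl in H0.
    destruct s as [h1 t]. simpl in *.
    assert (Hx : x0 <= xi <= h1).
    { apply H0. unfold SF_size; simpl; lia. }
    specialize (IH (ptd_cons _ _ Hp) ltac:(lra) Hb).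
    destruct IH as [IH1 IH2].
    rewrite Riemann_sum_cons, step_cons. simpl.
    change (plus (scal (h1 - x0) (g xi)) (Riemann_sum g {| SF_h := h1; SF_t := t |}))
      with ((h1 - x0) * g xi + Riemann_sum g {| SF_h := h1; SF_t := t |}).
    set (S := Riemann_sum g {| SF_h := h1; SF_t := t |}) in *.
    set (L := lastp {| SF_h := h1; SF_t := t |}) in *.
    set (st := seq_step (SF_lx {| SF_h := h1; SF_t := t |})) in *.
    assert (Hs1 := H x0 xi ltac:(lra) ltac:(lra) ltac:(lra)).
    assert (Hs2 := H xi h1 ltac:(lra) ltac:(lra) ltac:(lra)).
    assert (Hs3 := H x0 h1 ltac:(lra) ltac:(lra) ltac:(lra)).
    assert (Hs4 := H h1 L ltac:(lra) ltac:(lra) ltac:(lra)).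
    assert (Hg1 : g x0 <= g xi).
    { destruct (Rle_lt_or_eq_dec x0 xi ltac:(lra)) as [Hl| Heq]; [|rewrite Heq; lra]. nra. }
    assert (Hg2 : g xi <= g h1).
    { destruct (Rle_lt_or_eq_dec xi h1 ltac:(lra)) as [Hl| Heq]; [|rewrite Heq; lra]. nra. }
    assert (Hg3 : g h1 <= g L).
    { destruct (Rle_lt_or_eq_dec h1 L ltac:(lra)) as [Hl| Heq]; [|rewrite Heq; lra]. nra. }
    assert (Hst : 0 <= st) by apply seq_step_ge_0.
    assert (Hm1 : Rabs (h1 - x0) <= Rmax (Rabs (h1 - x0)) st) by apply Rmax_l.
    assert (Hm2 : st <= Rmax (Rabs (h1 - x0)) st) by apply Rmax_r.
    set (M := Rmax (Rabs (h1 - x0)) st) in *.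
    rewrite Rabs_right in Hm1 by lra.
    split; [lra|].
    apply Rabs_le_between' in IH2.
    apply Rabs_le_between'.
    assert (P1 : 0 <= (h1 - x0) * (g xi - g x0)) by (apply Rmult_le_pos; lra).
    assert (P2 : 0 <= (h1 - x0) * (g h1 - g xi)) by (apply Rmult_le_pos; lra).
    assert (P3 : 0 <= (M - (h1 - x0)) * (g h1 - g x0)) by (apply Rmult_le_pos; lra).
    assert (P4 : 0 <= (M - st) * (g L - g h1)) by (apply Rmult_le_pos; lra).
    split; lra.
Qed.

Lemma envelope (g u : R -> R) a b : a <= b -> Sandw g u a b -> is_RInt g a b (u b - u a).
Proof.
  intros Hab H.
  destruct (Rle_lt_or_eq_dec a b Hab) as [Hlt| Heq].
  2:{ subst b. rewrite Rminus_diag_eq by reflexivity.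
      exact (is_RInt_point g a). }
  apply filterlim_locally. intro eps.
  assert (HD : g a <= g b).
  { assert (Hs := H a b ltac:(lra) ltac:(lra) ltac:(lra)). nra. }
  assert (Hdp : 0 < eps / (g b - g a + 1)).
  { apply Rdiv_lt_0_compat; [apply cond_pos| lra]. }
  exists (mkposreal _ Hdp). intros s Hst [Hp [Hh Hl]].
  simpl in Hst.
  rewrite Rmin_left in Hh by lra. rewrite Rmax_right in Hl by lra.
  fold (lastp s) in Hl.
  destruct (env_sum g u a b H s Hp ltac:(lra) ltac:(lra)) as [_ Hb].
  rewrite Hl, Hh in Hb.
  assert (Hsg : sign (b - a) = 1) by (apply sign_eq_1; lra).
  rewrite Hsg. change (ball (u b - u a) eps (1 * Riemann_sum g s)). rewrite Rmult_1_l.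
  change (Rabs (Riemann_sum g s - (u b - u a)) < eps).
  assert (Hst0 : 0 <= seq_step (SF_lx s)) by apply seq_step_ge_0.
  assert (E : eps / (g b - g a + 1) * (g b - g a + 1) = eps) by (field; lra).
  assert (eps > 0) by apply cond_pos.
  nra.
Qed.

Definition Mono (g : R -> R) a b := forall s t, a <= s -> s <= t -> t <= b -> g s <= g t.

Fixpoint LS (g : R -> R) (x0 : R) (l : list R) (x : R) : R :=
  match l with nil => (x - x0) * g x0 | cons y l' => (y - x0) * g x0 + LS g y l' x end.

Fixpoint Chain (x0 : R) (l : list R) (x : R) : Prop :=
  match l with nil => x0 <= x | cons y l' => x0 <= y /\ Chain y l' x end.

Lemma chain_le l : forall x0 x, Chain x0 l x -> x0 <= x.
Proof. induction l as [|y l IH]; simpl; intros x0 x H; [lra|].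
  destruct H as [H1 H2]. specialize (IH _ _ H2). lra. Qed.

Lemma LS_ub g a b (Hm : Mono g a b) l : forall x0 x, a <= x0 -> x <= b -> Chain x0 l x ->
  LS g x0 l x <= (x - x0) * g x.
Proof.
  induction l as [|y l IH]; simpl; intros x0 x Ha Hb H.
  - assert (g x0 <= g x) by (apply Hm; lra). nra.
  - destruct H as [H1 H2]. assert (Hy := chain_le _ _ _ H2).
    specialize (IH y x ltac:(lra) Hb H2).
    assert (g x0 <= g x) by (apply Hm; lra). nra.
Qed.

Lemma LS_app g l : forall x0 x y, Chain x0 l x -> x <= y ->
  Chain x0 (l ++ x :: nil) y /\ LS g x0 (l ++ x :: nil) y = LS g x0 l x + (y - x) * g x.
Proof.
  induction l as [|z l IH]; simpl; intros x0 x y H Hxy.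
  - split; [lra| ring].
  - destruct H as [H1 H2]. destruct (IH z x y H2 Hxy) as [A1 A2].
    split; [tauto|]. rewrite A2. ring.
Qed.

Lemma LS_split g a b (Hm : Mono g a b) l : forall x0 x y, a <= x0 -> y <= b -> Chain x0 l y ->
  x0 <= x -> x <= y -> exists l1, Chain x0 l1 x /\ LS g x0 l y <= LS g x0 l1 x + (y - x) * g y.
Proof.
  induction l as [|z l IH]; simpl; intros x0 x y Ha Hb H Hx Hxy.
  - exists nil. simpl. split; [lra|].
    assert (g x0 <= g y) by (apply Hm; lra). nra.
  - destruct H as [H1 H2]. assert (Hzy := chain_le _ _ _ H2).
    destruct (Rle_or_lt z x) as [Hzx|Hzx].
    + destruct (IH z x y ltac:(lra) Hb H2 Hzx Hxy) as [l1 [C1 C2]].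
      exists (z :: l1). simpl. split; [tauto| lra].
    + exists nil. simpl. split; [lra|].
      assert (Hl := LS_ub g a b Hm l z y ltac:(lra) Hb H2).
      assert (g x0 <= g y) by (apply Hm; lra). nra.
Qed.

Definition Sset g a x := fun s => exists l, Chain a l x /\ s = LS g a l x.
Definition uL g a x := real (Lub_Rbar (Sset g a x)).

Lemma uL_spec g a b (Hm : Mono g a b) x : a <= x <= b ->
  (forall s, Sset g a x s -> s <= uL g a x) /\
  (forall M, (forall s, Sset g a x s -> s <= M) -> uL g a x <= M).
Proof.
  intros Hx. unfold uL.
  destruct (Lub_Rbar_correct (Sset g a x)) as [Hub Hl].
  assert (Hbd : is_ub_Rbar (Sset g a x) ((x - a) * g x)).
  { intros s [l [C ->]]. simpl. apply (LS_ub g a b Hm); lra || auto. }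
  assert (Hne : Sset g a x (LS g a nil x)) by (exists nil; simpl; split; [lra|auto]).
  destruct (Lub_Rbar (Sset g a x)) as [r| |] eqn:E.
  - simpl. split.
    + intros s Hs. exact (Hub s Hs).
    + intros M HM. apply (Hl (Finite M)). intros s Hs. simpl. auto.
  - exfalso. exact (Hl _ Hbd).
  - exfalso. exact (Hub _ Hne).
Qed.

Lemma uL_sandw g a b (Hm : Mono g a b) : Sandw g (uL g a) a b.
Proof.
  intros x y Hx Hxy Hy.
  destruct (uL_spec g a b Hm x ltac:(lra)) as [Sx1 Sx2].
  destruct (uL_spec g a b Hm y ltac:(lra)) as [Sy1 Sy2].
  split.
  - cut (uL g a x <= uL g a y - (y - x) * g x). { lra. }
    apply Sx2. intros s [l [C ->]].
    destruct (LS_app g l a x y C Hxy) as [A1 A2].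
    assert (Hs : Sset g a y (LS g a (l ++ x :: nil) y)) by (exists (l ++ x :: nil); auto).
    specialize (Sy1 _ Hs). lra.
  - cut (uL g a y <= uL g a x + (y - x) * g y). { lra. }
    apply Sy2. intros s [l [C ->]].
    destruct (LS_split g a b Hm l a x y ltac:(lra) Hy C Hx Hxy) as [l1 [C1 C2]].
    assert (Hs : Sset g a x (LS g a l1 x)) by (exists l1; auto).
    specialize (Sx1 _ Hs). lra.
Qed.

Lemma mono_RInt g a b (Hm : Mono g a b) : exists u, Sandw g u a b /\
  forall x y, a <= x -> x <= y -> y <= b -> RInt g x y = u y - u x.
Proof.
  exists (uL g a). split; [apply (uL_sandw g a b Hm)|].
  intros x y Hx Hxy Hy. apply is_RInt_unique. apply envelope; [lra|].
  intros s t Hs Hst Ht. apply (uL_sandw g a b Hm); lra.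
Qed.

Lemma sandw_RInt g u a b : Sandw g u a b -> forall x y, a <= x -> x <= y -> y <= b ->
  RInt g x y = u y - u x.
Proof.
  intros S x y Hx Hxy Hy. apply is_RInt_unique. apply envelope; [lra|].
  intros s t Hs Hst Ht. apply S; lra.
Qed.

Lemma I_bound g (Hm : Mono g 0 1) x y : 0 <= x <= 1 -> 0 <= y <= 1 ->
  (x - y) * g y <= RInt g 0 x - RInt g 0 y.
Proof.
  intros Hx Hy. destruct (mono_RInt g 0 1 Hm) as [u [S R]].
  rewrite (R 0 x), (R 0 y) by lra.
  destruct (Rle_or_lt x y) as [H|H].
  - destruct (S x y ltac:(lra) H ltac:(lra)). lra.
  - destruct (S y x ltac:(lra) ltac:(lra) ltac:(lra)). nra.
Qed.

Lemma Rmin_ge (k k' F : R) : 0 < k -> 0 <= F -> k <= k' -> Rmin (k' * F / k) F = F.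
Proof.
  intros Hk HF Hkk. apply Rmin_right.
  assert (E : k' * F / k - F = (k' - k) * F / k) by (field; lra).
  assert (0 <= (k' - k) * F / k).
  { apply Rmult_le_pos; [apply Rmult_le_pos; lra| left; apply Rinv_0_lt_compat; lra]. }
  lra.
Qed.

Lemma Rmin_lt (k k' F : R) : 0 < k -> 0 <= F -> k' <= k -> Rmin (k' * F / k) F = k' * F / k.
Proof.
  intros Hk HF Hkk. apply Rmin_left.
  assert (E : F - k' * F / k = (k - k') * F / k) by (field; lra).
  assert (0 <= (k - k') * F / k).
  { apply Rmult_le_pos; [apply Rmult_le_pos; lra| left; apply Rinv_0_lt_compat; lra]. }
  lra.
Qed.

Theorem proposition3 (f1 f2 p : R -> R -> R)
  (Hmech : is_mechanism f1 f2)
  (Hrel : forall v k, inV v -> inK k -> f1 v k = k * f2 v k) :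
  incentive_compatible f1 f2 p <->
  (forall v k, inV v -> inK k ->
     (forall v', inV v' -> v < v' -> f2 v k <= f2 v' k) /\
     p v k = p 0 1 + v * f2 v k - RInt (fun t => f2 t k) 0 v /\
     (forall k', inK k' -> k < k' ->
        RInt (fun t => f2 t k') 0 v <= RInt (fun t => f2 t k) 0 v) /\
     (forall k', inK k' -> k < k' ->
        RInt (fun t => f2 t k) 0 (v * k / k') <= RInt (fun t => f2 t k') 0 v)).
Proof.
  unfold inV, inK in *.
  split.
  - intros IC.
    unfold incentive_compatible, inV, inK in IC.
    set (Uk := fun k v => v * f2 v k - p v k).
    assert (ICg : forall v k v' k', 0 <= v <= 1 -> 0 < k <= 1 -> 0 <= v' <= 1 -> 0 < k' <= 1 ->
       v * Rmin (k' * f2 v' k' / k) (f2 v' k') - p v' k' <= Uk k v).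
    { intros v k v' k' Hv Hk Hv' Hk'. specialize (IC v k v' k' Hv Hk Hv' Hk').
      unfold U in IC. rewrite (Hrel v' k'), (Hrel v k) in IC by auto.
      replace (k * f2 v k / k) with (f2 v k) in IC by (field; lra).
      rewrite (Rmin_left (f2 v k)) in IC by lra. unfold Uk. lra. }
    assert (ICs : forall v k v', 0 <= v <= 1 -> 0 < k <= 1 -> 0 <= v' <= 1 ->
       Uk k v' + (v - v') * f2 v' k <= Uk k v).
    { intros v k v' Hv Hk Hv'. specialize (ICg v k v' k Hv Hk Hv' Hk).
      replace (k * f2 v' k / k) with (f2 v' k) in ICg by (field; lra).
      rewrite Rmin_left in ICg by lra. unfold Uk in *. lra. }
    assert (Sw : forall k, 0 < k <= 1 -> Sandw (fun t => f2 t k) (Uk k) 0 1).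
    { intros k Hk x y Hx Hxy Hy.
      assert (A1 := ICs y k x ltac:(lra) Hk ltac:(lra)).
      assert (A2 := ICs x k y ltac:(lra) Hk ltac:(lra)). split; lra. }
    assert (Int : forall k v, 0 < k <= 1 -> 0 <= v <= 1 ->
       RInt (fun t => f2 t k) 0 v = Uk k v - Uk k 0).
    { intros k v Hk Hv. apply (sandw_RInt _ _ 0 1 (Sw k Hk)); lra. }
    assert (P0 : forall k, 0 < k <= 1 -> p 0 k = p 0 1).
    { intros k Hk.
      assert (A1 := IC 0 k 0 1 ltac:(lra) Hk ltac:(lra) ltac:(lra)).
      assert (A2 := IC 0 1 0 k ltac:(lra) ltac:(lra) ltac:(lra) Hk).
      unfold U in *. rewrite !Rmult_0_l in *. lra. }
    intros v k Hv Hk.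
    assert (U0 : forall k, 0 < k <= 1 -> Uk k 0 = - p 0 1).
    { intros k0 Hk0. unfold Uk. rewrite P0 by auto. ring. }
    split; [|split; [|split]].
    + intros v' Hv' Hlt. destruct (Sw k Hk v v' ltac:(lra) ltac:(lra) ltac:(lra)) as [B1 B2].
      nra.
    + rewrite (Int k v Hk Hv), (U0 k Hk). unfold Uk. ring.
    + intros k' Hk' Hlt. rewrite (Int k v Hk Hv), (Int k' v Hk' Hv), U0, U0 by auto.
      assert (A := ICg v k v k' Hv Hk Hv Hk').
      rewrite Rmin_ge in A by (try lra; apply Hmech; auto).
      unfold Uk in *. lra.
    + intros k' Hk' Hlt.
      assert (Hw : 0 <= v * k / k' <= 1).
      { split. apply Rmult_le_pos; [apply Rmult_le_pos; lra| left; apply Rinv_0_lt_compat; lra].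
        apply Rmult_le_reg_r with k'; [lra|].
        replace (v * k / k' * k') with (v * k) by (field; lra). nra. }
      rewrite (Int k _ Hk Hw), (Int k' v Hk' Hv), U0, U0 by auto.
      assert (A := ICg v k' (v * k / k') k Hv Hk' Hw Hk).
      rewrite Rmin_lt in A by (try lra; apply Hmech; auto).
      replace (v * (k * f2 (v * k / k') k / k')) with (v * k / k' * f2 (v * k / k') k) in A
        by (field; lra).
      unfold Uk in *. lra.
  - intros Hc v k v' k' Hv Hk Hv' Hk'. unfold inV, inK in *.
    assert (Mo : forall k, 0 < k <= 1 -> Mono (fun t => f2 t k) 0 1).
    { intros k0 Hk0 s t Hs Hst Ht.
      destruct (Rle_lt_or_eq_dec s t Hst) as [Hl| Heq].
      - apply (proj1 (Hc s k0 ltac:(lra) Hk0)); lra.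
      - rewrite Heq; lra. }
    destruct (Hc v k Hv Hk) as [_ [Pv [C3 C4]]].
    destruct (Hc v' k' Hv' Hk') as [_ [Pv' _]].
    unfold U. rewrite (Hrel v' k'), (Hrel v k) by auto.
    replace (k * f2 v k / k) with (f2 v k) by (field; lra).
    assert (HF : 0 <= f2 v' k' <= 1) by (apply Hmech; auto).
    assert (HF0 : 0 <= f2 v k <= 1) by (apply Hmech; auto).
    rewrite (Rmin_left (f2 v k)) by lra.
    rewrite Pv, Pv'.
    destruct (Rle_or_lt k k') as [Hkk|Hkk].
    + rewrite Rmin_ge by lra.
      assert (B := I_bound _ (Mo k' Hk') v v' Hv Hv').
      assert (C : RInt (fun t => f2 t k') 0 v <= RInt (fun t => f2 t k) 0 v).
      { destruct (Rle_lt_or_eq_dec k k' Hkk) as [Hl| Heq].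
        - apply C3; auto.
        - rewrite Heq; lra. }
      lra.
    + rewrite Rmin_lt by lra.
      assert (Hw : 0 <= v * k' / k <= 1).
      { split. apply Rmult_le_pos; [apply Rmult_le_pos; lra| left; apply Rinv_0_lt_compat; lra].
        apply Rmult_le_reg_r with k; [lra|].
        replace (v * k' / k * k) with (v * k') by (field; lra). nra. }
      destruct (Hc v k' Hv Hk') as [_ [_ [_ C4']]].
      assert (D := C4' k Hk Hkk).
      assert (B := I_bound _ (Mo k' Hk') (v * k' / k) v' Hw Hv').
      replace (v * (k' * f2 v' k' / k)) with (v * k' / k * f2 v' k') by (field; lra).
      lra.
Qed.
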